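(* For every integer $\ell\geq 1$ there is a first-order prenex sentence $\varphi_\ell$ over $\tau_{\mathsf{ord}}$ that is true in $L_\ell$ and false in $L_m$ for every $m\geq 1$ with $m\neq \ell$, such that $\varphi_\ell$ has at most $q^*(\ell)+2$ quantifiers and its quantifier prefix strictly alternates between $\exists$ and $\forall$ and ends with $\forall$.
   Context: Vocabulary $\tau_{\mathsf{ord}} = \langle < ;\ \mathsf{min}, \mathsf{max}\rangle$ with $<$ binary and $\mathsf{min},\mathsf{max}$ constants. For $\ell \geq 1$, $L_\ell$ is the linear order with $\ell+1$ elements (its length is $\ell$), with $\mathsf{min},\mathsf{max}$ interpreted as first and last elements. Define $q^*_\forall, q^*_\exists : \mathbb{Z}_{\geq 1}\to\mathbb{N}$ by $q^*_\forall(1)=1$, $q^*_\exists(1)=2$, $q^*_\forall(2)=2$, and $q^*_\exists(2\ell) = q^*_\forall(\ell)+1$ ($\ell\geq 1$); $q^*_\exists(2\ell+1) = q^*_\forall(\ell+1)+1$ ($\ell \geq 1$); $q^*_\forall(2\ell) = q^*_\exists(\ell)+1$ ($\ell\geq 2$); $q^*_\forall(2\ell+1) = q^*_\exists(\ell)+1$ ($\ell\geq 1$). Let $q^*(\ell) = \min(q^*_\exists(\ell), q^*_\forall(\ell))$. *)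

(* Defs.v *)
From mathcomp Require Import all_boot.
Set Implicit Arguments. Unset Strict Implicit. Unset Printing Implicit Defensive.

Inductive term : Type :=
  | TVar of nat
  | TMin
  | TMax.

Inductive qfform : Type :=
  | FLt of term & term
  | FEq of term & term
  | FTrue
  | FFalse
  | FNot of qfform
  | FAnd of qfform & qfform
  | FOr of qfform & qfform.

Inductive quant : Type := QEx | QAll.

Definition quant_eqb (a b : quant) : bool :=
  match a, b with QEx, QEx | QAll, QAll => true | _, _ => false end.

(* A prenex formula: a quantifier qprefix [(Q1,x1); ...; (Qn,xn)]
   (outermost first) followed by a quantifier-free matrix. *)
Record prenex : Type := Prenex { qprefix : seq (quant * nat); matrix : qfform }.

Definition fv_term (t : term) : seq nat :=
  match t with TVar x => [:: x] | _ => [::] end.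

Fixpoint fv_qf (f : qfform) : seq nat :=
  match f with
  | FLt t1 t2 | FEq t1 t2 => fv_term t1 ++ fv_term t2
  | FTrue | FFalse => [::]
  | FNot g => fv_qf g
  | FAnd g h | FOr g h => fv_qf g ++ fv_qf h
  end.

Definition is_sentence (phi : prenex) : Prop :=
  forall x, x \in fv_qf (matrix phi) -> x \in map snd (qprefix phi).

Definition alternating_ending_forall (p : seq (quant * nat)) : Prop :=
  let qs := map fst p in
  (forall i, i.+1 < size qs -> quant_eqb (nth QAll qs i) (nth QAll qs i.+1) = false)
  /\ size qs > 0 /\ last QAll qs = QAll.

(* ---------- Semantics in L_m (elements 0..m, i.e. 'I_m.+1) ---------- *)
Definition eval_term (m : nat) (s : nat -> 'I_m.+1) (t : term) : 'I_m.+1 :=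
  match t with
  | TVar x => s x
  | TMin => ord0
  | TMax => ord_max
  end.

Fixpoint eval_qf (m : nat) (s : nat -> 'I_m.+1) (f : qfform) : Prop :=
  match f with
  | FLt t1 t2 => (nat_of_ord (eval_term s t1) < nat_of_ord (eval_term s t2))%N
  | FEq t1 t2 => eval_term s t1 = eval_term s t2
  | FTrue => True
  | FFalse => False
  | FNot g => ~ eval_qf s g
  | FAnd g h => eval_qf s g /\ eval_qf s h
  | FOr g h => eval_qf s g \/ eval_qf s h
  end.

Definition upd (m : nat) (s : nat -> 'I_m.+1) (x : nat) (a : 'I_m.+1) :
  nat -> 'I_m.+1 := fun y => if y == x then a else s y.

Fixpoint eval_prefix (m : nat) (p : seq (quant * nat)) (f : qfform)
    (s : nat -> 'I_m.+1) : Prop :=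
  match p with
  | [::] => eval_qf s f
  | (QEx, x) :: p' => exists a : 'I_m.+1, eval_prefix p' f (upd s x a)
  | (QAll, x) :: p' => forall a : 'I_m.+1, eval_prefix p' f (upd s x a)
  end.

(* L_m |= phi (for a sentence, the initial assignment is irrelevant). *)
Definition holds_in_L (m : nat) (phi : prenex) : Prop :=
  eval_prefix (qprefix phi) (matrix phi) (fun _ => ord0 : 'I_m.+1).

(* qaux fuel l = (q*_exists l, q*_forall l) whenever fuel >= l >= 1. *)
Fixpoint qaux (fuel l : nat) : nat * nat :=
  match fuel with
  | 0 => (0, 0)
  | f.+1 =>
    if l <= 1 then (2, 1)
    else if l == 2 then (2, 2)
    else
      let k := l./2 in
      if odd l then
        ((qaux f k.+1).2 + 1, (qaux f k).1 + 1)
      else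
        ((qaux f k).2 + 1, (qaux f k).1 + 1)
  end.

Definition qstar_exists (l : nat) : nat := (qaux l l).1.
Definition qstar_forall (l : nat) : nat := (qaux l l).2.
Definition qstar (l : nat) : nat := minn (qstar_exists l) (qstar_forall l).

(* Main.v *)
Require Import Defs.
From mathcomp Require Import all_boot zify.
From Stdlib Require Import Classical.
Set Implicit Arguments. Unset Strict Implicit. Unset Printing Implicit Defensive.


Definition flipq (q : quant) := match q with QEx => QAll | QAll => QEx end.

Fixpoint alt (q : quant) (n d : nat) : seq (quant * nat) :=
  match n with
  | 0 => [::]
  | n'.+1 => (q, d) :: alt (flipq q) n' d.+1
  end.

Definition ev (m : nat) (q : quant) (n d : nat) (M : qfform) (s : nat -> 'I_m.+1) :=
  eval_prefix (alt q n d) M s.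

Definition tok (e : nat) (t : term) : bool :=
  match t with TVar i => i < e | _ => true end.

Fixpoint qok (e : nat) (g : qfform) : bool :=
  match g with
  | FLt t1 t2 | FEq t1 t2 => tok e t1 && tok e t2
  | FTrue | FFalse => true
  | FNot g => qok e g
  | FAnd g h | FOr g h => qok e g && qok e h
  end.

Lemma tok_mono e e' t : e <= e' -> tok e t -> tok e' t.
Proof. case: t => //= i; lia. Qed.

Lemma qok_mono e e' g : e <= e' -> qok e g -> qok e' g.
Proof.
move=> le; elim: g => //=.
- by move=> t1 t2 /andP[h1 h2]; rewrite (tok_mono le h1) (tok_mono le h2).
- by move=> t1 t2 /andP[h1 h2]; rewrite (tok_mono le h1) (tok_mono le h2).
- by move=> g1 IH1 g2 IH2 /andP[h1 h2]; rewrite IH1 // IH2.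
- by move=> g1 IH1 g2 IH2 /andP[h1 h2]; rewrite IH1 // IH2.
Qed.

Lemma eval_term_agree m e (s s' : nat -> 'I_m.+1) t :
  tok e t -> (forall v, v < e -> s v = s' v) -> eval_term s t = eval_term s' t.
Proof. by case: t => //= i hi H; apply: H. Qed.

Lemma eval_qf_agree m e (s s' : nat -> 'I_m.+1) g :
  qok e g -> (forall v, v < e -> s v = s' v) -> (eval_qf s g <-> eval_qf s' g).
Proof.
move=> hg H; elim: g hg => /=.
- by move=> t1 t2 /andP[h1 h2]; rewrite (eval_term_agree h1 H) (eval_term_agree h2 H).
- by move=> t1 t2 /andP[h1 h2]; rewrite (eval_term_agree h1 H) (eval_term_agree h2 H).
- by [].
- by [].
- by move=> g IH hg; rewrite IH.
- by move=> g1 IH1 g2 IH2 /andP[h1 h2]; rewrite IH1 // IH2.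
- by move=> g1 IH1 g2 IH2 /andP[h1 h2]; rewrite IH1 // IH2.
Qed.

Lemma upd_lt m (s : nat -> 'I_m.+1) e a v : v < e -> upd s e a v = s v.
Proof. by move=> h; rewrite /upd; case: eqP => // E; lia. Qed.

Lemma qf_upd m (s : nat -> 'I_m.+1) e a g :
  qok e g -> (eval_qf (upd s e a) g <-> eval_qf s g).
Proof. move=> h; apply: (eval_qf_agree h) => v hv; exact: upd_lt. Qed.

Lemma term_upd m (s : nat -> 'I_m.+1) e a t :
  tok e t -> eval_term (upd s e a) t = eval_term s t.
Proof. move=> h; apply: (eval_term_agree h) => v hv; exact: upd_lt. Qed.

Lemma ev_cong m (M1 M2 : qfform) :
  (forall s : nat -> 'I_m.+1, eval_qf s M1 <-> eval_qf s M2) ->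
  forall q n d (s : nat -> 'I_m.+1), ev q n d M1 s <-> ev q n d M2 s.
Proof.
move=> H q n; elim: n q => [|n IH] q d s; first exact: H.
rewrite /ev /=; case: q => /=.
- by split=> -[a ha]; exists a; apply/(IH _ _ _).
- by split=> ha a; apply/(IH _ _ _).
Qed.

Lemma evEx m n d M (s : nat -> 'I_m.+1) :
  ev QEx n.+1 d M s = exists a, ev QAll n d.+1 M (upd s d a).
Proof. by []. Qed.

Lemma evAll m n d M (s : nat -> 'I_m.+1) :
  ev QAll n.+1 d M s = forall a, ev QEx n d.+1 M (upd s d a).
Proof. by []. Qed.

Lemma ev_and m q n d g R (s : nat -> 'I_m.+1) :
  qok d g -> (ev q n d (FAnd g R) s <-> eval_qf s g /\ ev q n d R s).
Proof.
elim: n q d s => [|n IH] q d s hg; first by [].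
have hg' : qok d.+1 g by apply: qok_mono hg.
case: q; rewrite ?evEx ?evAll.
- split.
  + by move=> [a]; rewrite IH // qf_upd // => -[h1 h2]; split=> //; exists a.
  + by move=> -[h1 [a ha]]; exists a; rewrite IH // qf_upd.
- split.
  + move=> H; split.
    * by have := H ord0; rewrite IH // qf_upd // => -[].
    * by move=> a; have := H a; rewrite IH // => -[].
  + by move=> [h1 h2] a; rewrite IH // qf_upd.
Qed.

Definition ite (g M1 M2 : qfform) := FOr (FAnd g M1) (FAnd (FNot g) M2).

Lemma ev_ite m q n d g M1 M2 (s : nat -> 'I_m.+1) :
  qok d g ->
  (eval_qf s g -> (ev q n d (ite g M1 M2) s <-> ev q n d M1 s)) /\
  (~ eval_qf s g -> (ev q n d (ite g M1 M2) s <-> ev q n d M2 s)).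
Proof.
elim: n q d s => [|n IH] q d s hg.
  by rewrite /ev /=; split=> hs; tauto.
have hg' : qok d.+1 g by apply: qok_mono hg.
have hu : forall a, eval_qf (upd s d a) g <-> eval_qf s g by move=> a; apply: qf_upd.
case: q; rewrite ?evEx ?evAll; split=> hs.
- split=> -[a ha]; exists a; move: ha;
  by case: (IH QAll d.+1 (upd s d a) hg') => [H _]; rewrite H // hu.
- split=> -[a ha]; exists a; move: ha;
  by case: (IH QAll d.+1 (upd s d a) hg') => [_ H]; rewrite H // hu.
- split=> ha a; have := ha a;
  by case: (IH QEx d.+1 (upd s d a) hg') => [H _]; rewrite H // hu.
- split=> ha a; have := ha a;
  by case: (IH QEx d.+1 (upd s d a) hg') => [_ H]; rewrite H // hu.
Qed.

Lemma ev_not m q n d M (s : nat -> 'I_m.+1) :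
  ev q n d (FNot M) s <-> ~ ev (flipq q) n d M s.
Proof.
elim: n q d s => [|n IH] q d s; first by [].
case: q => /=; rewrite ?evEx ?evAll.
- split.
  + by move=> [a ha] H; move: ha; rewrite IH /=; apply; apply: H.
  + move=> H; apply: NNPP => H1; apply: H => a; apply: NNPP => H2; apply: H1.
    by exists a; rewrite IH.
- split.
  + by move=> H [a ha]; move: (H a); rewrite IH.
  + by move=> H a; rewrite IH => h; apply: H; exists a.
Qed.

Lemma ev_false m q n d (s : nat -> 'I_m.+1) : ev q n d FFalse s <-> False.
Proof.
elim: n q d s => [|n IH] q d s; first by [].
case: q; rewrite ?evEx ?evAll.
- by split=> // -[a]; rewrite IH.
- by split=> // H; have := H ord0; rewrite IH.
Qed.

Lemma ev_true m q n d (s : nat -> 'I_m.+1) : ev q n d FTrue s.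
Proof.
elim: n q d s => [|n IH] q d s; first by [].
case: q; rewrite ?evEx ?evAll.
- by exists ord0; apply: IH.
- by move=> a; apply: IH.
Qed.

Lemma ev_qf m q n d g (s : nat -> 'I_m.+1) : qok d g -> (ev q n d g s <-> eval_qf s g).
Proof.
move=> h.
rewrite (@ev_cong m g (FAnd g FTrue)); last by move=> s'; simpl; tauto.
by rewrite ev_and //; have := ev_true q n d s; tauto.
Qed.


Definition vt m (s : nat -> 'I_m.+1) t : nat := nat_of_ord (eval_term s t).

Definition win d tx ty := FAnd (FLt tx (TVar d)) (FOr (FLt (TVar d) ty) (FEq (TVar d) ty)).

Lemma win_sem m (s : nat -> 'I_m.+1) d tx ty :
  eval_qf s (win d tx ty) <-> vt s tx < s d /\ s d <= vt s ty.
Proof.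
rewrite /win /vt /=; split=> -[h1 h2]; split=> //.
- by case: h2 => [h|->] //; apply: ltnW.
- by move: h2; rewrite leq_eqVlt => /orP[/eqP/val_inj ->|h]; [right|left].
Qed.

Lemma qok_win e tx ty : tok e tx -> tok e ty -> qok e.+1 (win e tx ty).
Proof.
move=> h1 h2 /=; rewrite /= ltnSn !andbT.
by rewrite (tok_mono (leqnSn e) h1) (tok_mono (leqnSn e) h2).
Qed.

Definition mergeF e z P Q := ite (FOr (FLt (TVar e) z) (FEq (TVar e) z)) P Q.

Lemma vt_upd m (s : nat -> 'I_m.+1) e a t : tok e t -> vt (upd s e a) t = vt s t.
Proof. by move=> h; rewrite /vt term_upd. Qed.

Lemma upd_eq m (s : nat -> 'I_m.+1) e a : upd s e a e = a.
Proof. by rewrite /upd eqxx. Qed.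

Lemma merge_sem m k e tx tz ty R1 R2 (s : nat -> 'I_m.+1) :
  tok e tx -> tok e tz -> tok e ty ->
  vt s tx < vt s tz -> vt s tz < vt s ty ->
  ev QAll k.+1 e (mergeF e tz (FNot (FAnd (win e tx tz) R1)) (FNot (FAnd (win e tz ty) R2))) s <->
  ev QAll k.+1 e (FNot (FAnd (win e tx tz) R1)) s /\ ev QAll k.+1 e (FNot (FAnd (win e tz ty) R2)) s.
Proof.
move=> hx hz hy hxz hzy.
set g := FOr (FLt (TVar e) tz) (FEq (TVar e) tz).
have hg : qok e.+1 g by rewrite /= ltnSn (tok_mono (leqnSn e) hz).
have gsem : forall a, eval_qf (upd s e a) g <-> a <= vt s tz.
  move=> a; rewrite /g /= upd_eq term_upd // /vt.
  split; first by case=> [h|->] //; apply: ltnW.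
  by rewrite leq_eqVlt => /orP[/eqP/val_inj ->|h]; [right|left].
have F1 : forall a : 'I_m.+1, vt s tz < a -> ev QEx k e.+1 (FNot (FAnd (win e tx tz) R1)) (upd s e a).
  move=> a ha; rewrite ev_not /= ev_and; last by apply: qok_win.
  by rewrite win_sem upd_eq (vt_upd _ _ hz); case=> -[_ h]; move: h; rewrite leqNgt ha.
have F2 : forall a : 'I_m.+1, a <= vt s tz -> ev QEx k e.+1 (FNot (FAnd (win e tz ty) R2)) (upd s e a).
  move=> a ha; rewrite ev_not /= ev_and; last by apply: qok_win.
  by rewrite win_sem upd_eq (vt_upd _ _ hz); case=> -[h _]; move: h; rewrite ltnNge ha.
rewrite !evAll; split.
- move=> H; split=> a; have := H a; case: (ev_ite QEx k (FNot (FAnd (win e tx tz) R1))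
     (FNot (FAnd (win e tz ty) R2)) (upd s e a) hg) => Ht Hf.
  + case: (leqP a (vt s tz)) => ha; first by rewrite Ht // gsem.
    by move=> _; apply: F1.
  + case: (leqP a (vt s tz)) => ha; first by move=> _; apply: F2.
    by rewrite Hf //; rewrite gsem => h; move: ha; rewrite ltnNge h.
- move=> [H1 H2] a; case: (ev_ite QEx k (FNot (FAnd (win e tx tz) R1))
     (FNot (FAnd (win e tz ty) R2)) (upd s e a) hg) => Ht Hf.
  case: (leqP a (vt s tz)) => ha; first by rewrite Ht // gsem.
  by rewrite Hf //; rewrite gsem => h; move: ha; rewrite ltnNge h.
Qed.


Inductive fam := FGE | FLE | FEQ | FNE.

Definition le1body e tx ty := FNot (FAnd (FLt tx (TVar e)) (FLt (TVar e) ty)).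

Definition base (f : fam) (l : nat) : qfform :=
  match f with FGE => if l <= 1 then FTrue else FFalse | _ => FFalse end.

Fixpoint build (f : fam) (l n d : nat) (tx ty : term) {struct n} : qfform :=
  match n with
  | 0 => FFalse
  | n'.+1 =>
    FAnd (win d tx ty)
    (if n' == 0 then base f l else
    match f with
    | FGE => if l <= 1 then FTrue else
        FAnd (FLt (TVar d) ty)
          (mergeF d.+1 (TVar d) (FNot (build FLE (l %/ 2).-1 n' d.+1 tx (TVar d)))
                                (FNot (build FLE (l - l %/ 2).-1 n' d.+1 (TVar d) ty)))
    | FLE => if l == 0 then FFalse else if l == 1 then le1body d.+1 tx ty else
        ite (FEq (TVar d) ty) (FNot (build FGE 2 n' d.+1 tx ty))
          (mergeF d.+1 (TVar d) (FNot (build FGE (l %/ 2).+1 n' d.+1 tx (TVar d)))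
                                (FNot (build FGE (l - l %/ 2).+1 n' d.+1 (TVar d) ty)))
    | FEQ => if l <= 1 then le1body d.+1 tx ty else
        FAnd (FLt (TVar d) ty)
          (mergeF d.+1 (TVar d) (FNot (build FNE (l %/ 2) n' d.+1 tx (TVar d)))
                                (FNot (build FNE (l - l %/ 2) n' d.+1 (TVar d) ty)))
    | FNE => if l <= 1 then FLt (TVar d) ty else
        ite (FEq (TVar d) ty) (FNot (build FGE (l %/ 2).+1 n' d.+1 tx ty))
          (mergeF d.+1 (TVar d) (FNot (build FNE (l %/ 2) n' d.+1 tx (TVar d)))
                                (FNot (build FEQ (l - l %/ 2) n' d.+1 (TVar d) ty)))
    end)
  end.

Definition sem (f : fam) (l D : nat) : Prop :=
  match f with FGE => l <= D | FLE => D <= l | FEQ => D = l | FNE => D <> l end.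

Definition bnd n := 2 ^ (n - 2).

Definition bound (f : fam) (n l : nat) : Prop :=
  match f with
  | FGE => l <= 1 \/ (2 <= n /\ l <= bnd n + 1)
  | FLE => l = 0 \/ (2 <= n /\ l <= bnd n)
  | _ => 1 <= l /\ 2 <= n /\ l <= bnd n
  end.

Lemma bnd_pos n : 1 <= bnd n.
Proof. by rewrite /bnd expn_gt0. Qed.

Lemma bnd_step k : 1 <= k -> (k = 1 /\ bnd k.+1 = 1) \/ (2 <= k /\ bnd k.+1 = 2 * bnd k).
Proof.
case: k => [//|[|k]] _; first by left.
right; split=> //; rewrite /bnd.
have -> : k.+3 - 2 = k.+1 by lia.
have -> : k.+2 - 2 = k by lia.
by rewrite expnS.
Qed.

Lemma merge_build m k e f1 l1 f2 l2 tx tz ty (s : nat -> 'I_m.+1) :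
  tok e tx -> tok e tz -> tok e ty ->
  vt s tx < vt s tz -> vt s tz < vt s ty ->
  ev QAll k.+1 e (mergeF e tz (FNot (build f1 l1 k.+1 e tx tz)) (FNot (build f2 l2 k.+1 e tz ty))) s <->
  ev QAll k.+1 e (FNot (build f1 l1 k.+1 e tx tz)) s /\ ev QAll k.+1 e (FNot (build f2 l2 k.+1 e tz ty)) s.
Proof. exact: merge_sem. Qed.

Ltac nlia := repeat match goal with
  | H : is_true (tok _ _) |- _ => clear H
  | H : is_true (qok _ _) |- _ => clear H end; lia.

Lemma build_ok m n : forall f l d tx ty (s : nat -> 'I_m.+1),
  1 <= n -> tok d tx -> tok d ty -> vt s tx < vt s ty -> bound f n l ->
  (ev QEx n d (build f l n d tx ty) s <-> sem f l (vt s ty - vt s tx)).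
Proof.
elim: n => [//|k IH] f l d tx ty s _ hx hy hxy hb.
have hx' : tok d.+1 tx := tok_mono (leqnSn d) hx.
have hy' : tok d.+1 ty := tok_mono (leqnSn d) hy.
have hz' : tok d.+1 (TVar d) by rewrite /= ltnSn.
have sub : forall f' l' p q (s' : nat -> 'I_m.+1), 1 <= k -> tok d.+1 p -> tok d.+1 q ->
    vt s' p < vt s' q -> bound f' k l' ->
    (ev QAll k d.+1 (FNot (build f' l' k d.+1 p q)) s' <-> ~ sem f' l' (vt s' q - vt s' p)).
  by move=> f' l' p q s' hk hp hq hpq hb'; rewrite ev_not /= IH.
set X := vt s tx. set Y := vt s ty.
have Ex : forall a : 'I_m.+1, vt (upd s d a) tx = X by move=> a; apply: vt_upd.
have Ey : forall a : 'I_m.+1, vt (upd s d a) ty = Y by move=> a; apply: vt_upd.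
have Ez : forall a : 'I_m.+1, vt (upd s d a) (TVar d) = a by move=> a; rewrite /vt /= upd_eq.
have W : forall B, ev QEx k.+1 d (FAnd (win d tx ty) B) s <->
    exists a : 'I_m.+1, (X < a <= Y) /\ ev QAll k d.+1 B (upd s d a).
  move=> B; rewrite evEx; split=> -[a ha]; exists a; move: ha.
  - rewrite ev_and ?qok_win // win_sem upd_eq !vt_upd // => -[[h1 h2] h3].
    by split=> //; apply/andP.
  - by rewrite ev_and ?qok_win // win_sem upd_eq !vt_upd // => -[/andP[h1 h2] h3].
have Yb : Y < m.+1 := ltn_ord _.
have mk : forall v, v <= Y -> exists a : 'I_m.+1, nat_of_ord a = v.
  by move=> v hv; exists (inord v); rewrite inordK //; lia.
have qokz : qok d.+1 (FLt (TVar d) ty) by rewrite /= ltnSn.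
have qokze : qok d.+1 (FEq (TVar d) ty) by rewrite /= ltnSn.
have qz : forall a : 'I_m.+1, eval_qf (upd s d a) (FLt (TVar d) ty) <-> a < Y.
  by move=> a; rewrite /= upd_eq term_upd.
have qe : forall a : 'I_m.+1, eval_qf (upd s d a) (FEq (TVar d) ty) <-> nat_of_ord a = Y.
  move=> a; rewrite /= upd_eq term_upd //; split; first by move=> ->.
  by move=> h; apply: val_inj.
have MB : forall f1 l1 f2 l2 (a : 'I_m.+1), 1 <= k -> X < a -> a < Y ->
    bound f1 k l1 -> bound f2 k l2 ->
    (ev QAll k d.+1 (mergeF d.+1 (TVar d) (FNot (build f1 l1 k d.+1 tx (TVar d)))
        (FNot (build f2 l2 k d.+1 (TVar d) ty))) (upd s d a)
      <-> ~ sem f1 l1 (a - X) /\ ~ sem f2 l2 (Y - a)).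
  move=> f1 l1 f2 l2 a hk h1 h2 hb1 hb2.
  have h1' : vt (upd s d a) tx < vt (upd s d a) (TVar d) by rewrite Ex Ez.
  have h2' : vt (upd s d a) (TVar d) < vt (upd s d a) ty by rewrite Ez Ey.
  destruct k as [|k']; first by [].
  by rewrite merge_build // !sub // Ex Ez Ey.
have SB : forall f1 l1 (a : 'I_m.+1), 1 <= k -> bound f1 k l1 ->
    (ev QAll k d.+1 (FNot (build f1 l1 k d.+1 tx ty)) (upd s d a) <-> ~ sem f1 l1 (Y - X)).
  move=> f1 l1 a hk hb1.
  have hv : vt (upd s d a) tx < vt (upd s d a) ty by rewrite Ex Ey.
  by rewrite sub // Ex Ey.
have hx2 : tok d.+2 tx by apply: (tok_mono _ hx); lia.
have hy2 : tok d.+2 ty by apply: (tok_mono _ hy); lia.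
have LB : forall a : 'I_m.+1, 1 <= k ->
    (ev QAll k d.+1 (le1body d.+1 tx ty) (upd s d a) <-> forall b : 'I_m.+1, ~ (X < b /\ b < Y)).
  move=> a hk; destruct k as [|k']; first by [].
  rewrite evAll; split=> H b; have := H b; rewrite ev_qf /=.
  - by rewrite upd_eq !term_upd.
  - by rewrite /= ltnSn hx2 hy2.
  - by rewrite upd_eq !term_upd.
  - by rewrite /= ltnSn hx2 hy2.
have hXY : X < Y := hxy.
case: f hb => /= hb; cbn [build]; rewrite W.
-
  case: (leqP l 1) => hl.
  + rewrite if_same; split; first by move=> _; nlia.
    move=> _; exists (eval_term s ty); split; last by apply: ev_true.
    by apply/andP; split.
  + rewrite /=.
    have hk : 1 <= k by nlia.
    have hk0 : (k == 0) = false by nlia.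
    rewrite hk0 /=.
    have hbs := bnd_step hk; have hbp := bnd_pos k.
    split.
    * move=> [a [/andP[h1 h2] H]]; move: H; rewrite ev_and // qz => -[h3].
      by rewrite MB //=; nlia.
    * move=> hle; have [a ha] := mk (X + l %/ 2) ltac:(nlia).
      exists a; split; first by apply/andP; nlia.
      rewrite ev_and // qz; split; first by nlia.
      by rewrite MB //=; nlia.
-
  case: (posnP l) => [l0|lp].
  + rewrite l0 /= if_same; split; last by nlia.
    by move=> [a [_ H]]; move: H; rewrite ev_false.
  + rewrite /=.
    have hk : 1 <= k by nlia.
    have hk0 : (k == 0) = false by nlia.
    rewrite hk0 /=.
    have hbs := bnd_step hk; have hbp := bnd_pos k.
    case: (eqVneq l 1) => [l1|ln1].
    * rewrite /=; split.
      - move=> [a [_ H]]; move: H; rewrite LB // => H.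
        case: (leqP (Y - X) 1) => hd; first by rewrite l1.
        have [b hb'] := mk (X.+1) ltac:(nlia).
        by exfalso; apply: (H b); nlia.
      - move=> hd; exists (eval_term s ty); split; first by apply/andP; split.
        by rewrite LB // => b; nlia.
    * rewrite /=.
      have hk2 : 2 <= k by nlia.
      have Hite := fun a : 'I_m.+1 => ev_ite QAll k (FNot (build FGE 2 k d.+1 tx ty))
          (mergeF d.+1 (TVar d) (FNot (build FGE (l %/ 2).+1 k d.+1 tx (TVar d)))
             (FNot (build FGE (l - l %/ 2).+1 k d.+1 (TVar d) ty))) (upd s d a) qokze.
      split.
      - move=> [a [/andP[h1 h2] H]]; case: (Hite a) => Ht Hf.
        case: (eqVneq (nat_of_ord a) Y) => aY.
        + by move: H; rewrite Ht ?qe // SB //=; nlia.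
        + move: H; rewrite Hf; last by rewrite qe; apply/eqP.
          by rewrite MB //=; nlia.
      - move=> hle; case: (leqP (Y - X) 1) => hd.
        + exists (eval_term s ty); split; first by apply/andP; split.
          case: (Hite (eval_term s ty)) => Ht _.
          by rewrite Ht ?qe // SB //=; nlia.
        + have [a ha] := mk (maxn X.+1 (Y - (l - l %/ 2))) ltac:(nlia).
          exists a; split; first by apply/andP; nlia.
          case: (Hite a) => _ Hf.
          rewrite Hf; last by rewrite qe; nlia.
          by rewrite MB //=; nlia.
-
  case: (leqP l 1) => hl.
  + rewrite /=.
    have hk : 1 <= k by nlia.
    have hk0 : (k == 0) = false by nlia.
    rewrite hk0 /=.
    have l1 : l = 1 by nlia.
    rewrite l1; split.
    * move=> [a [_ H]]; move: H; rewrite LB // => H.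
      case: (leqP (Y - X) 1) => hd; first by nlia.
      have [b hb'] := mk (X.+1) ltac:(nlia).
      by exfalso; apply: (H b); nlia.
    * move=> hd; exists (eval_term s ty); split; first by apply/andP; split.
      by rewrite LB // => b; nlia.
  + rewrite /=.
    have hk : 1 <= k by nlia.
    have hk0 : (k == 0) = false by nlia.
    rewrite hk0 /=.
    have hbs := bnd_step hk; have hbp := bnd_pos k.
    split.
    * move=> [a [/andP[h1 h2] H]]; move: H; rewrite ev_and // qz => -[h3].
      by rewrite MB //=; nlia.
    * move=> hle; have [a ha] := mk (X + l %/ 2) ltac:(nlia).
      exists a; split; first by apply/andP; nlia.
      rewrite ev_and // qz; split; first by nlia.
      by rewrite MB //=; nlia.
-
  case: (leqP l 1) => hl.
  + rewrite /=.
    have l1 : l = 1 by nlia.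
    have hk0 : (k == 0) = false by nlia.
    rewrite hk0 /=.
    split.
    * move=> [a [/andP[h1 h2] H]]; move: H; rewrite ev_qf // qz; nlia.
    * move=> hd; have [a ha] := mk (X.+1) ltac:(nlia).
      exists a; split; first by apply/andP; nlia.
      by rewrite ev_qf // qz; nlia.
  + rewrite /=.
    have hk : 1 <= k by nlia.
    have hk0 : (k == 0) = false by nlia.
    rewrite hk0 /=.
    have hbs := bnd_step hk; have hbp := bnd_pos k.
    have hk2 : 2 <= k by nlia.
    have Hite := fun a : 'I_m.+1 => ev_ite QAll k (FNot (build FGE (l %/ 2).+1 k d.+1 tx ty))
          (mergeF d.+1 (TVar d) (FNot (build FNE (l %/ 2) k d.+1 tx (TVar d)))
             (FNot (build FEQ (l - l %/ 2) k d.+1 (TVar d) ty))) (upd s d a) qokze.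
    split.
    * move=> [a [/andP[h1 h2] H]]; case: (Hite a) => Ht Hf.
      case: (eqVneq (nat_of_ord a) Y) => aY.
      - by move: H; rewrite Ht ?qe // SB //=; nlia.
      - move: H; rewrite Hf; last by rewrite qe; apply/eqP.
        by rewrite MB //=; nlia.
    * move=> hne; case: (leqP (Y - X) (l %/ 2)) => hd.
      - exists (eval_term s ty); split; first by apply/andP; split.
        case: (Hite (eval_term s ty)) => Ht _.
        by rewrite Ht ?qe // SB //=; nlia.
      - have [a ha] := mk (X + l %/ 2) ltac:(nlia).
        exists a; split; first by apply/andP; nlia.
        case: (Hite a) => _ Hf.
        rewrite Hf; last by rewrite qe; nlia.
        by rewrite MB //=; nlia.
Qed.


Lemma build_qok n : forall f l d tx ty, tok d tx -> tok d ty -> qok (d + n) (build f l n d tx ty).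
Proof.
elim: n => [|k IH] f l d tx ty hx hy; first by [].
have hx1 : tok (d + k.+1) tx by apply: (tok_mono _ hx); lia.
have hy1 : tok (d + k.+1) ty by apply: (tok_mono _ hy); lia.
have hz : d < d + k.+1 by lia.
have IHb : forall f l p q, tok d.+1 p -> tok d.+1 q -> qok (d + k.+1) (build f l k d.+1 p q).
  by move=> f' l' p q hp hq; rewrite -addSnnS; apply: IH.
have hx' : tok d.+1 tx by apply: (tok_mono _ hx); lia.
have hy' : tok d.+1 ty by apply: (tok_mono _ hy); lia.
have hz' : tok d.+1 (TVar d) by rewrite /= ltnSn.
rewrite /= /win /= hx1 hy1 hz /=.
case: eqP => [k0|kn].
  by case: f => //=; case: (l <= 1).
have hz1 : d.+1 < d + k.+1 by lia.
case: f => /=.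
- by case: (l <= 1) => //=; rewrite /mergeF /ite /= hz hy1 hz1 !IHb.
- case: (l == 0) => //; case: (l == 1) => /=.
    by rewrite /le1body /= hx1 hy1 hz1.
  by rewrite /mergeF /ite /= hz hy1 hz1 !IHb.
- case: (l <= 1) => /=.
    by rewrite /le1body /= hx1 hy1 hz1.
  by rewrite /mergeF /ite /= hz hy1 hz1 !IHb.
- case: (l <= 1) => /=; first by rewrite hz hy1.
  by rewrite /mergeF /ite /= hz hy1 hz1 !IHb.
Qed.

Lemma qok_fv e g v : qok e g -> v \in fv_qf g -> v < e.
Proof.
have tk : forall t, tok e t -> v \in fv_term t -> v < e.
  by case=> //= i hi; rewrite inE => /eqP ->.
elim: g => /=.
- by move=> t1 t2 /andP[h1 h2]; rewrite mem_cat => /orP[]; [apply: tk h1|apply: tk h2].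
- by move=> t1 t2 /andP[h1 h2]; rewrite mem_cat => /orP[]; [apply: tk h1|apply: tk h2].
- by [].
- by [].
- by [].
- by move=> g1 IH1 g2 IH2 /andP[h1 h2]; rewrite mem_cat => /orP[]; [apply: IH1|apply: IH2].
- by move=> g1 IH1 g2 IH2 /andP[h1 h2]; rewrite mem_cat => /orP[]; [apply: IH1|apply: IH2].
Qed.

Lemma alt_snd q n d : map snd (alt q n d) = iota d n.
Proof. by elim: n q d => [|n IH] q d //=; rewrite IH. Qed.

Lemma alt_size q n d : size (map fst (alt q n d)) = n.
Proof. by elim: n q d => [|n IH] q d //=; rewrite IH. Qed.

Lemma alt_nth q n d i : i < n ->
  nth QAll (map fst (alt q n d)) i = if odd i then flipq q else q.
Proof.
elim: n q d i => [|n IH] q d i //= hi.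
case: i hi => [|i] hi //=.
rewrite IH //; case: (odd i) => //=; by case: q.
Qed.

Lemma alt_alternating q n d : alternating_ending_forall (alt q n d) <->
  (0 < n /\ (if odd n.-1 then flipq q else q) = QAll).
Proof.
rewrite /alternating_ending_forall alt_size; split.
- move=> [_ [hn hl]]; split=> //; move: hl.
  rewrite -nth_last alt_size alt_nth //; lia.
- move=> [hn hl]; split; last split=> //.
  + move=> i hi; rewrite !alt_nth //; last by lia.
    by rewrite /=; case: (odd i); case: q {hl}.
  + rewrite -nth_last alt_size alt_nth //; lia.
Qed.


Lemma qaux_bound f : forall l, 1 <= l <= f ->
  3 * l + 2 <= 2 ^ ((qaux f l).1 + 1) /\ 3 * l + 1 <= 2 ^ ((qaux f l).2 + 1).
Proof.
elim: f => [|f IH] l hl; first by lia.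
have E2 : forall x, 2 ^ (x + 1 + 1) = 2 * 2 ^ (x + 1) by move=> x; rewrite (addn1 (x + 1)) expnS.
rewrite /=; case: (leqP l 1) => h1; first by rewrite /=; lia.
case: (eqVneq l 2) => [->|h2] //=.
have hl2 := odd_double_half l; rewrite -mul2n in hl2.
move: hl2; set k := l./2; case: (odd l) => /= hl2.
- have [A1 A2] := IH k.+1 ltac:(lia).
  have [B1 B2] := IH k ltac:(lia).
  rewrite !E2; lia.
- have [B1 B2] := IH k ltac:(lia).
  rewrite !E2; lia.
Qed.

Lemma qstar_bound l : 1 <= l -> 3 * l + 1 <= 2 ^ (qstar l + 1).
Proof.
move=> hl; have [h1 h2] := @qaux_bound l l ltac:(lia).
rewrite /qstar /qstar_exists /qstar_forall /minn.
by case: ifP => _; lia.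
Qed.

Theorem mainTheorem5 (l : nat) (hl : 1 <= l) :
  exists phi : prenex,
    is_sentence phi /\
    alternating_ending_forall (qprefix phi) /\
    size (qprefix phi) <= qstar l + 2 /\
    holds_in_L l phi /\
    (forall m : nat, 1 <= m -> m <> l -> ~ holds_in_L m phi).
Proof.
set q := qstar l.
have hq : 3 * l + 1 <= 2 ^ (q + 1) := qstar_bound hl.
have hq2 : 2 ^ (q + 1) = 2 * 2 ^ q by rewrite addn1 expnS.
have hlq : l <= 2 ^ q by lia.
set n := q + 2.
have hbnd : bnd n = 2 ^ q by rewrite /bnd /n addnK.
have hn : n = q + 2 by [].
have hb0 : 1 <= l /\ 2 <= n /\ l <= bnd n by rewrite hbnd; lia.
have hb : forall f, f = FEQ \/ f = FNE -> bound f n l.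
  by move=> f; case=> E; rewrite E.
have sem_ok : forall f m, 1 <= m -> f = FEQ \/ f = FNE ->
    (ev QEx n 0 (build f l n 0 TMin TMax) (fun _ => ord0 : 'I_m.+1) <-> sem f l m).
  move=> f m hm hf.
  have h01 : vt (fun _ => ord0 : 'I_m.+1) TMin < vt (fun _ => ord0 : 'I_m.+1) TMax by [].
  have hbf := hb f hf.
  rewrite build_ok //; last by rewrite hn addn2.
  by rewrite /vt /= subn0.
have snt : forall Q M, qok n M -> is_sentence (Prenex (alt Q n 0) M).
  move=> Q M hM x /= hx; rewrite alt_snd mem_iota /=.
  by apply: (qok_fv hM).
have hpred : odd n.-1 = ~~ odd n by rewrite hn addn2 /= negbK.
case hodd: (odd n).
- exists (Prenex (alt QAll n 0) (FNot (build FNE l n 0 TMin TMax))).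
  split; first by apply: snt; apply: (build_qok n FNE l (d:=0)).
  split; first by rewrite /= alt_alternating hpred hodd; split=> //; rewrite hn addn2.
  split; first by rewrite /= -(size_map fst) alt_size.
  split.
  + rewrite /holds_in_L /= -/(ev _ _ _ _ _) ev_not /=.
    rewrite sem_ok /=; [by move=> H; apply: H | by [] | by right].
  + move=> m hm hml; rewrite /holds_in_L /= -/(ev _ _ _ _ _) ev_not /=.
    rewrite sem_ok /=; [by apply | by [] | by right].
- exists (Prenex (alt QEx n 0) (build FEQ l n 0 TMin TMax)).
  split; first by apply: snt; apply: (build_qok n FEQ l (d:=0)).
  split; first by rewrite /= alt_alternating hpred hodd; split=> //; rewrite hn addn2.
  split; first by rewrite /= -(size_map fst) alt_size.
  split.
  + rewrite /holds_in_L /= -/(ev _ _ _ _ _) sem_ok /=; [by [] | by [] | by left].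
  + move=> m hm hml; rewrite /holds_in_L /= -/(ev _ _ _ _ _) sem_ok /=; [by [] | by [] | by left].
Qed.
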